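(* Let $\mathcal{H}$ be a Hilbert space, let $C\in\mathcal{B}(\mathcal{H})$ be similar to a contraction, and let $E\in\mathcal{B}(\mathcal{H})$ be a nilpotent operator such that $EC=0$. Then $T=C+E$ is similar to a contraction.
   Context: An operator $R\in\mathcal{B}(\mathcal{H})$ is similar to a contraction if there is an invertible $L\in\mathcal{B}(\mathcal{H})$ with $\|L^{-1}RL\|\le 1$. *)

(* Defs.v *)
From HB Require Import structures.
From mathcomp Require Import all_boot all_order all_algebra.
From mathcomp Require Import all_classical all_reals all_analysis.
From mathcomp Require Export complex.
Export numFieldNormedType.Exports.
Import Order.TTheory GRing.Theory Num.Theory.
Local Open Scope ring_scope.

Set Implicit Arguments.
Unset Strict Implicit.
Unset Printing Implicit Defensive.

(* ip is an inner product on the complex normed space H (linear in the first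
   argument, conjugate symmetric) inducing the norm of H: `|x|^2 = <x,x>.
   Together with completeness of H (a completeNormedModType) this makes
   (H, ip) a complex Hilbert space. *)
Definition is_hilbert_inner_product (R : realType) (H : completeNormedModType R[i])
    (ip : H -> H -> R[i]) : Prop :=
  [/\ (forall (a : R[i]) (x y z : H), ip (a *: x + y) z = a * ip x z + ip y z),
      (forall x y : H, ip y x = (ip x y)^*)
    & (forall x : H, `|x| ^+ 2 = ip x x)].

Definition bounded_op (R : realType) (H : completeNormedModType R[i]) (T : H -> H) : Prop :=
  (forall (a : R[i]) (x y : H), T (a *: x + y) = a *: T x + T y) /\ continuous T.

Definition is_contraction (R : realType) (H : completeNormedModType R[i]) (T : H -> H) : Prop :=
  forall x : H, `|T x| <= `|x|.

Definition similar_to_contraction (R : realType) (H : completeNormedModType R[i])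
    (T : H -> H) : Prop :=
  exists L Linv : H -> H,
    [/\ bounded_op L, bounded_op Linv,
        (forall x, L (Linv x) = x), (forall x, Linv (L x) = x)
      & is_contraction (fun x => Linv (T (L x)))].

Definition nilpotent_op (R : realType) (H : completeNormedModType R[i]) (E : H -> H) : Prop :=
  exists n : nat, forall x : H, iter n E x = 0.

(* Main.v *)
From HB Require Import structures.
Require Import Defs.
From mathcomp Require Import all_boot all_order all_algebra.
From mathcomp Require Import all_classical all_reals all_analysis.
From mathcomp Require Import ring lra.
Import Order.TTheory GRing.Theory Num.Theory.
Local Open Scope ring_scope.
Local Open Scope classical_set_scope.

Set Implicit Arguments.
Unset Strict Implicit.
Unset Printing Implicit Defensive.
Definition linP (R : realType) (U V : lmodType R[i]) (f : U -> V) :=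
  forall (a : R[i]) (x y : U), f (a *: x + y) = a *: f x + f y.

Section LinFacts.
Variables (R : realType) (U V : lmodType R[i]) (f : U -> V).
Hypothesis hf : linP f.
Lemma lin0 : f 0 = 0.
Proof.
have h := hf 1 0 0; rewrite scale1r addr0 scale1r in h.
by apply: (addrI (f 0)); rewrite addr0 -h.
Qed.
Lemma linD x y : f (x + y) = f x + f y.
Proof. by rewrite -[x]scale1r hf !scale1r. Qed.
Lemma linZ a x : f (a *: x) = a *: f x.
Proof. by rewrite -[a *: x]addr0 hf lin0 addr0. Qed.
Lemma linN x : f (- x) = - f x.
Proof. by rewrite -scaleN1r linZ scaleN1r. Qed.
Lemma linB x y : f (x - y) = f x - f y.
Proof. by rewrite linD linN. Qed.
End LinFacts.

Lemma inv_small (R : realType) (e : R) : 0 < e ->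
  exists N, forall k, (N <= k)%N -> (k.+1%:R : R)^-1 < e.
Proof.
move=> e0; exists (Num.trunc (e^-1)) => k hk.
have h1 := truncnS_gt (e^-1).
have h2 : (Num.trunc e^-1).+1%:R <= (k.+1%:R : R) by rewrite ler_nat ltnS.
have h3 : e^-1 < k.+1%:R := lt_le_trans h1 h2.
rewrite -(invrK e) ltf_pV2 // ?posrE ?invr_gt0 //.
Qed.
Section Cont.
Variables (R : realType) (H : normedModType R[i]) (V : normedModType R[i]).

Lemma cont_add (f g : H -> V) : continuous f -> continuous g ->
  continuous (fun x => f x + g x).
Proof. by move=> cf cg x; apply: (cvgD (cf x) (cg x)). Qed.

Lemma cont_opp (f : H -> V) : continuous f -> continuous (fun x => - f x).
Proof. by move=> cf x; apply: (cvgN (cf x)). Qed.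

Lemma cont_scale (a : R[i]) (f : H -> V) : continuous f ->
  continuous (fun x => a *: f x).
Proof. by move=> cf x; apply: (cvgZr (cf x)). Qed.

Lemma cont_cst (v : V) : continuous (fun _ : H => v).
Proof. by move=> x; apply: cvg_cst. Qed.

Lemma cont_id : continuous (fun x : H => x).
Proof. by move=> x; apply: cvg_id. Qed.
End Cont.

Lemma cont_comp (R : realType) (U V W : normedModType R[i]) (f : U -> V)
  (g : V -> W) : continuous f -> continuous g -> continuous (fun x => g (f x)).
Proof. by move=> cf cg x; apply: continuous_comp; [apply: cf | apply: cg]. Qed.

Section Lin.
Variables (R : realType) (H V : normedModType R[i]).
Definition linf (f : H -> V) := f.
Variable f : H -> V.
Hypothesis hf : forall (a : R[i]) (x y : H), f (a *: x + y) = a *: f x + f y.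
Let hf' : linear (linf f). Proof. move=> a x y; exact: hf. Qed.
HB.instance Definition _ := GRing.isLinear.Build R[i] H V *:%R (linf f) hf'.

Lemma lin_bound : continuous f ->
  exists2 k : R[i], 0 < k & forall x, `|f x| <= k * `|x|.
Proof. by move=> cf; have := @linear_lipschitz _ _ _ (linf f) cf. Qed.

Lemma lin_cont (k : R[i]) : 0 <= k -> (forall x, `|f x| <= k * `|x|) ->
  continuous f.
Proof.
move=> k0 hk; apply: (@bounded_linear_continuous _ _ _ (linf f)).
apply/ex_bound; exists k; rewrite /linf.
near=> x; apply: (le_trans (hk x)).
rewrite -[leRHS]mulr1; apply: ler_wpM2l => //.
Unshelve. all: by end_near. Qed.
End Lin.
Section Hilbert.
Variables (R : realType) (H : completeNormedModType R[i]) (ip : H -> H -> R[i]).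
Hypothesis hip : is_hilbert_inner_product ip.

Lemma ReD (a b : R[i]) : complex.Re (a + b) = complex.Re a + complex.Re b.
Proof. by case: a; case: b. Qed.
Lemma ReN (a : R[i]) : complex.Re (- a) = - complex.Re a.
Proof. by case: a. Qed.
Lemma ReRM (a : R) (b : R[i]) : complex.Re (a%:C%C * b) = a * complex.Re b.
Proof. case: b => x y /=; ring. Qed.
Lemma ReR (a : R) : complex.Re (a%:C%C) = a.
Proof. by []. Qed.
Lemma ReJ (a : R[i]) : complex.Re (a^*) = complex.Re a.
Proof. by case: a. Qed.

Lemma ipDZl a x y z : ip (a *: x + y) z = a * ip x z + ip y z.
Proof. by case: hip. Qed.
Lemma ipC x y : ip y x = (ip x y)^*.
Proof. by case: hip. Qed.
Lemma ipxx x : ip x x = `|x| ^+ 2.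
Proof. by case: hip. Qed.

Lemma ipDl x y z : ip (x + y) z = ip x z + ip y z.
Proof. by rewrite -[x]scale1r ipDZl mul1r scale1r. Qed.
Lemma ip0l z : ip 0 z = 0.
Proof.
have h := ipDl 0 0 z; rewrite addr0 in h.
by apply: (addrI (ip 0 z)); rewrite addr0 -h.
Qed.
Lemma ipZl a x z : ip (a *: x) z = a * ip x z.
Proof. by rewrite -[a *: x]addr0 ipDZl ip0l addr0. Qed.
Lemma ipNl x z : ip (- x) z = - ip x z.
Proof. by rewrite -scaleN1r ipZl mulN1r. Qed.
Lemma ipBl x y z : ip (x - y) z = ip x z - ip y z.
Proof. by rewrite ipDl ipNl. Qed.
Lemma ipDr x y z : ip z (x + y) = ip z x + ip z y.
Proof. by rewrite ipC ipDl rmorphD /= -!ipC. Qed.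
Lemma ipZr a x z : ip z (a *: x) = a^* * ip z x.
Proof. by rewrite ipC ipZl rmorphM /= -ipC. Qed.
Lemma ip0r z : ip z 0 = 0.
Proof. by rewrite ipC ip0l conjC0. Qed.
Lemma ipNr x z : ip z (- x) = - ip z x.
Proof. by rewrite ipC ipNl rmorphN /= -ipC. Qed.
Lemma ipBr x y z : ip z (x - y) = ip z x - ip z y.
Proof. by rewrite ipDr ipNr. Qed.

Definition nm (x : H) : R := complex.Re `|x|.
Lemma nmE x : `|x| = (nm x)%:C%C.
Proof. by rewrite /nm RRe_real // normr_real. Qed.
Lemma nm_ge0 x : 0 <= nm x.
Proof. by move: (normr_ge0 x); rewrite lecE => /andP[_]. Qed.
Lemma ipxxR x : ip x x = (nm x ^+ 2)%:C%C.
Proof. by rewrite ipxx nmE rmorphXn. Qed.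
Lemma nm_eq0 x : nm x = 0 -> x = 0.
Proof. by move=> h; apply/eqP; rewrite -normr_eq0 nmE h. Qed.
Lemma nm0 : nm 0 = 0.
Proof. by rewrite /nm normr0. Qed.
Lemma nmN x : nm (- x) = nm x.
Proof. by rewrite /nm normrN. Qed.
Lemma nmD x y : nm (x + y) <= nm x + nm y.
Proof. by rewrite -lecR rmorphD /= -!nmE ler_normD. Qed.
Lemma nmZ (a : R[i]) x : nm (a *: x) = complex.Re `|a| * nm x.
Proof.
by rewrite /nm normrZ -[`|a|]RRe_real ?normr_real // nmE ReRM.
Qed.
Lemma nmZR (t : R) x : 0 <= t -> nm (t%:C%C *: x) = t * nm x.
Proof. by move=> t0; rewrite nmZ ger0_norm ?ler0c. Qed.

Definition rip x y := complex.Re (ip x y).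
Lemma ripC x y : rip y x = rip x y.
Proof. by rewrite /rip ipC ReJ. Qed.
Lemma ripDl x y z : rip (x + y) z = rip x z + rip y z.
Proof. by rewrite /rip ipDl ReD. Qed.
Lemma ripNl x z : rip (- x) z = - rip x z.
Proof. by rewrite /rip ipNl ReN. Qed.
Lemma ripBl x y z : rip (x - y) z = rip x z - rip y z.
Proof. by rewrite ripDl ripNl. Qed.
Lemma ripZl (t : R) x z : rip (t%:C%C *: x) z = t * rip x z.
Proof. by rewrite /rip ipZl ReRM. Qed.
Lemma ripDr x y z : rip z (x + y) = rip z x + rip z y.
Proof. by rewrite ripC ripDl !(ripC z). Qed.
Lemma ripNr x z : rip z (- x) = - rip z x.
Proof. by rewrite ripC ripNl ripC. Qed.
Lemma ripBr x y z : rip z (x - y) = rip z x - rip z y.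
Proof. by rewrite ripDr ripNr. Qed.
Lemma ripZr (t : R) x z : rip z (t%:C%C *: x) = t * rip z x.
Proof. by rewrite ripC ripZl ripC. Qed.
Lemma rip0l z : rip 0 z = 0.
Proof. by rewrite /rip ip0l. Qed.
Lemma rip0r z : rip z 0 = 0.
Proof. by rewrite /rip ip0r. Qed.
Lemma ripxx x : rip x x = nm x ^+ 2.
Proof. by rewrite /rip ipxxR. Qed.

Lemma nmD2 x y : nm (x + y) ^+ 2 = nm x ^+ 2 + nm y ^+ 2 + 2 * rip x y.
Proof.
rewrite -!ripxx !ripDl !ripDr (ripC y x); ring.
Qed.
Lemma nmB2 x y : nm (x - y) ^+ 2 = nm x ^+ 2 + nm y ^+ 2 - 2 * rip x y.
Proof. by rewrite nmD2 nmN ripNr; ring. Qed.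

Lemma CS x y : rip x y <= nm x * nm y.
Proof.
have [y0|ny0] := eqVneq (nm y) 0.
  by rewrite (nm_eq0 y0) rip0r nm0 mulr0.
have b0 : 0 < nm y ^+ 2 by rewrite exprn_gt0 // lt_def ny0 nm_ge0.
set c := rip x y; set s := c / nm y ^+ 2.
have hs : s * nm y ^+ 2 = c by rewrite /s mulfVK // gt_eqF.
have h := nm_ge0 (x - s%:C%C *: y).
have := nmB2 x (s%:C%C *: y).
have -> : nm (s%:C%C *: y) ^+ 2 = s ^+ 2 * nm y ^+ 2.
  by rewrite -ripxx ripZl ripZr ripxx; ring.
rewrite ripZr -/c => e.
have h2 : 0 <= nm x ^+ 2 + s ^+ 2 * nm y ^+ 2 - 2 * (s * c).
  by rewrite -e exprn_ge0.
have h4 : c * c <= nm x ^+ 2 * nm y ^+ 2.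
  have -> : c * c = (s * c) * nm y ^+ 2 by rewrite -hs; ring.
  have : s * c <= nm x ^+ 2 by rewrite -hs in h2 *; nra.
  by move=> h5; rewrite ler_wpM2r // ltW.
have hx := nm_ge0 x; have hy := nm_ge0 y.
have hp : 0 <= nm x * nm y := mulr_ge0 hx hy.
have [hc|hc] := lerP c 0; first exact: le_trans hp.
have e2 : c * c <= (nm x * nm y) * (nm x * nm y).
  by apply: (le_trans h4); rewrite le_eqVlt; apply/orP; left; apply/eqP; ring.
nra.
Qed.

Lemma rip_all0 w m : (forall a : R[i], rip w (a *: m) = 0) -> ip w m = 0.
Proof.
move=> h; set c := ip w m.
have := h c; rewrite /rip ipZr -/c.
have -> : c^* * c = `|c| ^+ 2 by rewrite normCK mulrC.
move=> e1.
have e2 : `|c| ^+ 2 = 0.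
  by rewrite -[`|c| ^+ 2]RRe_real ?realX ?normr_real // e1.
by apply/eqP; rewrite -normr_eq0 -sqrf_eq0 e2.
Qed.

Lemma ip_sep u v : (forall x, ip x u = ip x v) -> u = v.
Proof.
move=> h; apply/eqP; rewrite -subr_eq0 -normr_eq0.
have := h (u - v); move/eqP; rewrite -subr_eq0 -ipBr ipxx.
by rewrite expf_eq0.
Qed.

Lemma ip_norm x y : `|ip x y| <= `|x| * `|y|.
Proof.
set c := ip x y.
have [->|c0] := eqVneq c 0.
  by rewrite normr0 mulr_ge0.
set u := c^* / `|c|.
have hu : ip (u *: x) y = `|c|.
  by rewrite ipZl -/c /u mulrAC [c^* * c]mulrC -normCK expr2 mulfK // normr_eq0.
have hnu : complex.Re `|u| = 1.
  by rewrite /u normrM normfV norm_conjC normr_id mulfV ?normr_eq0.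
have := CS (u *: x) y; rewrite /rip hu nmZ hnu mul1r => hle.
rewrite -[`|c|]RRe_real ?normr_real // !nmE -rmorphM lecR //.
Qed.

Lemma ip_contl y : continuous (fun x => (ip x y : R[i]^o)).
Proof.
apply: (@lin_cont _ _ (R[i]^o) _ _ `|y|) => //.
  by move=> a x z; exact: ipDZl.
by move=> x; rewrite mulrC; exact: ip_norm.
Qed.
Lemma nm_sqr_lt (a r : R) : 0 <= a -> 0 < r -> a ^+ 2 < r ^+ 2 -> a < r.
Proof. by move=> a0 r0; rewrite ltr_pXn2r // ?nnegrE // ltW. Qed.

Lemma proj_ker (V : normedModType R[i]) (g : H -> V) :
  linP g -> continuous g ->
  forall x, exists p, g p = 0 /\ (forall m, g m = 0 -> ip (x - p) m = 0).
Proof.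
move=> gl gc x.
have g0 := lin0 gl.
have kD m1 m2 : g m1 = 0 -> g m2 = 0 -> g (m1 + m2) = 0.
  by move=> h1 h2; rewrite (linD gl) h1 h2 addr0.
have kZ a m : g m = 0 -> g (a *: m) = 0.
  by move=> h; rewrite (linZ gl) h scaler0.
pose S := [set r : R | exists m, g m = 0 /\ r = nm (x - m) ^+ 2].
have hlb : has_lbound S.
  by exists 0 => r [m [_ ->]]; rewrite exprn_ge0 // nm_ge0.
have hS : has_inf S by split => //; exists (nm (x - 0) ^+ 2), 0.
set d := inf S.
have dle m : g m = 0 -> d <= nm (x - m) ^+ 2.
  by move=> hm; apply: inf_lbound => //; exists m.
have d0 : 0 <= d.
  by apply: lb_le_inf => //; [exists (nm (x - 0) ^+ 2), 0|move=> r [m [_ ->]]; rewrite exprn_ge0 // nm_ge0].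
have hseq k : exists m, g m = 0 /\ nm (x - m) ^+ 2 < d + (k.+1%:R)^-1.
  have hk : 0 < (k.+1%:R : R)^-1 by rewrite invr_gt0 ltr0Sn.
  have [e [m [hm ->]] he] := inf_adherent hk hS.
  by exists m.
have [ms hms] := choice hseq.
have par j k : nm (ms j - ms k) ^+ 2 <= 2 * (j.+1%:R)^-1 + 2 * (k.+1%:R)^-1.
  have [gj hj] := hms j; have [gk hk] := hms k.
  set w := ms j + ms k.
  have gw : g (2^-1 *: w) = 0 by apply: kZ; apply: kD.
  have hw := dle _ gw.
  have e1 : (x - ms j) + (x - ms k) = 2 *: (x - 2^-1 *: w).
    by rewrite scalerBr scalerA mulfV ?pnatr_eq0 // scale1r scaler_nat mulr2n /w opprD addrACA.
  have e2 : (x - ms j) - (x - ms k) = ms k - ms j by rewrite opprB addrC addrA subrK.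
  have e3 : nm (2 *: (x - 2^-1 *: w)) ^+ 2 = 4 * nm (x - 2^-1 *: w) ^+ 2.
    have -> : (2 : R[i]) = (2 : R)%:C%C by rewrite rmorph_nat.
    by rewrite nmZR ?ler0n // exprMn; congr (_ * _); rewrite -natrX.
  have hpar := nmD2 (x - ms j) (x - ms k).
  have hpar2 := nmB2 (x - ms j) (x - ms k).
  rewrite e1 e3 in hpar; rewrite e2 in hpar2.
  have -> : ms j - ms k = - (ms k - ms j) by rewrite opprB.
  have hsum : nm (ms k - ms j) ^+ 2 + 4 * nm (x - 2^-1 *: w) ^+ 2 =
     2 * nm (x - ms j) ^+ 2 + 2 * nm (x - ms k) ^+ 2 by rewrite hpar2 hpar; ring.
  rewrite nmN; move: hj hk hw hsum; set ij := (j.+1%:R)^-1; set ik := (k.+1%:R)^-1.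
  generalize (nm (ms k - ms j) ^+ 2) (nm (x - 2^-1 *: w) ^+ 2) (nm (x - ms j) ^+ 2) (nm (x - ms k) ^+ 2) => A B C D.
  lra.
have hc : cauchy (ms @ \oo).
  apply/cauchyP => e e0.
  have er : e = (complex.Re e)%:C%C by rewrite RRe_real // gtr0_real.
  have r0 : 0 < complex.Re e by move: e0; rewrite ltcE => /andP[_].
  set r := complex.Re e in er r0.
  have r4 : 0 < r ^+ 2 / 4 by rewrite divr_gt0 // exprn_gt0.
  have [N hN] := inv_small r4.
  exists (ms N); exists N => // k /= hk.
  rewrite -ball_normE /ball_ /= nmE er ltcR.
  apply: nm_sqr_lt => //; first exact: nm_ge0.
  have h1 := par N k.
  have h2 : (k.+1%:R : R)^-1 <= (N.+1%:R)^-1.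
    by rewrite lef_pV2 ?posrE ?ltr0Sn // ler_nat ltnS.
  have h3 := hN N (leqnn N).
  move: h1 h2 h3; set iN := (N.+1%:R)^-1; set ik := (k.+1%:R)^-1 => h1 h2 h3.
  lra.
have hp : ms @ \oo --> lim (ms @ \oo) by apply: cauchy_cvg.
set p := lim (ms @ \oo) in hp.
have gp : g p = 0.
  have h1 : (g \o ms) @ \oo --> g p := cvg_comp _ _ hp (gc p).
  have e : g \o ms = fun _ => 0 by apply/funext => k; exact: (hms k).1.
  rewrite e in h1; apply: (norm_cvg_unique h1); exact: cvg_cst.
have hmin : nm (x - p) ^+ 2 <= d.
  apply/ler_addgt0Pr => e e0.
  have q0 : 0 < 3 * (2 * d + 5) by rewrite mulr_gt0 //; lra.
  set eta := Num.min 1 (e / (3 * (2 * d + 5))).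
  have eta0 : 0 < eta by rewrite lt_min ltr01 divr_gt0.
  have eta1 : eta <= 1 by rewrite ge_min lexx.
  have eta2 : eta <= e / (3 * (2 * d + 5)) by rewrite ge_min lexx orbT.
  have eta3 : (2 * d + 5) * eta <= e / 3.
    move: eta2; rewrite ler_pdivlMr // => h.
    rewrite ler_pdivlMr //; nra.
  have e3 : 0 < e / 3 by rewrite divr_gt0.
  have [N1 hN1] := inv_small e3.
  have eta0' : 0 < eta%:C%C :> R[i] by rewrite ltcR.
  have [N2 _ hN2] := (cvgrPdist_lt _ _).1 hp _ eta0'.
  set k := maxn N1 N2.
  have hk1 := hN1 k (leq_maxl _ _).
  have hk2 : nm (p - ms k) < eta.
    by have := hN2 k (leq_maxr _ _); rewrite /= nmE ltcR.
  have [_ hk3] := hms k.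
  have hk4 : (k.+1%:R : R)^-1 <= 1 by rewrite invf_le1 ?ltr0Sn // ler1n.
  have ex : x - p = (x - ms k) + (ms k - p) by rewrite addrA subrK.
  have hcs := CS (x - ms k) (ms k - p).
  have hd := nmD2 (x - ms k) (ms k - p).
  rewrite -ex in hd.
  have hpm : nm (ms k - p) = nm (p - ms k) by rewrite -nmN opprB.
  rewrite hpm in hd hcs.
  move: hk1 hk3 hk4 hd hcs.
  set ik := (k.+1%:R)^-1.
  set a := nm (x - ms k); set dl := nm (p - ms k).
  have a0 : 0 <= a := nm_ge0 _.
  have dl0 : 0 <= dl := nm_ge0 _.
  move=> hk1 hk3 hk4 hd hcs.
  have ha : a <= d + 2 by nra.
  have hdd : dl * dl <= eta by nra.
  have had : a * dl <= (d + 2) * eta by apply: ler_pM; lra.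
  nra.
exists p; split => // m gm.
apply: rip_all0 => a.
have gm' : g (a *: m) = 0 := kZ _ _ gm.
set m' := a *: m in gm' *.
set c := rip (x - p) m'; set b := nm m' ^+ 2.
have b0 : 0 <= b by rewrite exprn_ge0 // nm_ge0.
set s := c / (b + 1).
have hs : s * (b + 1) = c by rewrite /s mulfVK // gt_eqF //; lra.
have h := dle (p + s%:C%C *: m') (kD _ _ gp (kZ _ _ gm')).
have ex : x - (p + s%:C%C *: m') = (x - p) - s%:C%C *: m' by rewrite opprD addrA.
rewrite ex nmB2 ripZr -/c in h.
have e2 : nm (s%:C%C *: m') ^+ 2 = s ^+ 2 * b.
  by rewrite -ripxx ripZl ripZr ripxx /b; ring.
rewrite e2 in h.
rewrite -hs in h *.
have h1 : 0 <= s ^+ 2 * b - 2 * (s * (s * (b + 1))) by lra.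
have h2 : s ^+ 2 * (b + 2) <= 0 by lra.
have b2 : 0 < b + 2 by lra.
have h3 : s ^+ 2 <= 0 by rewrite -(pmulr_lle0 _ b2).
have h4 : s ^+ 2 = 0 by apply/le_anti; rewrite h3 sqr_ge0.
have -> : s = 0 by apply/eqP; rewrite -sqrf_eq0 h4.
by rewrite mul0r.
Qed.
Lemma nm_le_sq (a b : R) : 0 <= b -> a ^+ 2 <= b ^+ 2 -> 0 <= a -> a <= b.
Proof. by move=> b0 h a0; rewrite -(ler_pXn2r (_ : 0 < 2)%N) ?nnegrE. Qed.

Lemma op_bound (C : H -> H) : linP C -> continuous C ->
  exists M : R, 0 <= M /\ forall x, nm (C x) <= M * nm x.
Proof.
move=> cl cc; have [k k0 hk] := lin_bound cl cc.
have kr : k = (complex.Re k)%:C%C by rewrite RRe_real // gtr0_real.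
exists (complex.Re k); split.
  by move: k0; rewrite ltcE => /andP[_ /ltW].
by move=> x; have := hk x; rewrite kr !nmE -rmorphM lecR.
Qed.

Lemma cont_of_bound (C : H -> H) (M : R) : linP C -> 0 <= M ->
  (forall x, nm (C x) <= M * nm x) -> continuous C.
Proof.
move=> cl M0 hM; apply: (@lin_cont _ _ _ _ cl M%:C%C); first by rewrite ler0c.
by move=> x; rewrite !nmE -rmorphM lecR.
Qed.

Section Proj.
Variables (V : normedModType R[i]) (g : H -> V) (P : H -> H).
Hypotheses (gl : linP g) (hP1 : forall x, g (P x) = 0)
  (hP2 : forall x m, g m = 0 -> ip (x - P x) m = 0).

Lemma ip_self0 w : ip w w = 0 -> w = 0.
Proof. by rewrite ipxx => /eqP; rewrite sqrf_eq0 normr_eq0 => /eqP. Qed.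

Lemma proj_fix x : g x = 0 -> P x = x.
Proof.
move=> gx; have gw : g (x - P x) = 0 by rewrite (linB gl) gx hP1 subr0.
by have /ip_self0/eqP := hP2 x gw; rewrite subr_eq0 => /eqP.
Qed.

Lemma ipP_ker z m : g m = 0 -> ip (P z) m = ip z m.
Proof. by move=> gm; have /eqP := hP2 z gm; rewrite ipBl subr_eq0 => /eqP. Qed.

Lemma proj_lin : linP P.
Proof.
move=> a x y; set v := a *: x + y.
set D := P v - (a *: P x + P y).
have gD : g D = 0.
  by rewrite (linB gl) (linD gl) (linZ gl) !hP1 scaler0 addr0 subr0.
have h : ip D D = 0.
  by rewrite /D ipBl ipDl ipZl !ipP_ker // /v ipDZl subrr.
by apply/eqP; rewrite -subr_eq0; apply/eqP; apply: ip_self0.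
Qed.

Lemma proj_orth x : ip (x - P x) (P x) = 0.
Proof. exact: hP2. Qed.

Lemma proj_pyth x : nm x ^+ 2 = nm (P x) ^+ 2 + nm (x - P x) ^+ 2.
Proof.
have := nmD2 (P x) (x - P x); rewrite addrC subrK => ->.
by rewrite ripC /rip proj_orth mulr0 addr0.
Qed.

Lemma proj_le x : nm (P x) <= nm x.
Proof.
apply: nm_le_sq; [exact: nm_ge0| |exact: nm_ge0].
by rewrite (proj_pyth x) lerDl exprn_ge0 // nm_ge0.
Qed.

Lemma proj_cont : continuous P.
Proof.
apply: (@cont_of_bound _ 1 proj_lin ler01) => x; rewrite mul1r; exact: proj_le.
Qed.

Lemma proj_sa x y : ip (P x) y = ip x (P y).
Proof.
have e1 : ip (P x) y = ip (P x) (P y).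
  have := hP2 y (hP1 x); rewrite ipC => /eqP; rewrite conjC_eq0 ipBr subr_eq0.
  by move=> /eqP.
have e2 : ip x (P y) = ip (P x) (P y).
  by rewrite ipP_ker.
by rewrite e1 e2.
Qed.
End Proj.
Lemma proj_ex (V : normedModType R[i]) (g : H -> V) : linP g -> continuous g ->
  exists P : H -> H, (forall x, g (P x) = 0) /\
    (forall x m, g m = 0 -> ip (x - P x) m = 0).
Proof.
move=> gl gc; have [P hP] := choice (proj_ker gl gc).
by exists P; split => x; [exact: (hP x).1 | exact: (hP x).2].
Qed.

Lemma riesz (f : H -> R[i]^o) : linP f -> continuous f ->
  exists z, forall x, f x = ip x z.
Proof.
move=> fl fc.
have [[x0 fx0]|hno] := pselect (exists x0, f x0 != 0); last first.
  exists 0 => x; rewrite ip0r.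
  by case: (eqVneq (f x) 0) => // hx; exfalso; apply: hno; exists x.
have [p [fp hp]] := proj_ker fl fc x0.
set w := x0 - p.
have fw : f w = f x0 by rewrite (linB fl) fp subr0.
have ww : ip w w != 0.
  apply/negP => /eqP /ip_self0 w0.
  by move: fx0; rewrite -fw w0 (lin0 fl) eqxx.
exists ((f w / ip w w)^* *: w) => x; rewrite ipZr conjCK.
set u := f x *: w - f w *: x.
have fu : f u = 0.
  by rewrite (linB fl) !(linZ fl) /GRing.scale /= mulrC subrr.
have h1 : ip w u = 0 by exact: hp.
have h2 : ip u w = 0 by rewrite ipC h1 conjC0.
move: h2; rewrite ipBl !ipZl => /eqP; rewrite subr_eq0 => /eqP h2.
apply: (mulIf ww); rewrite h2; field; exact: ww.
Qed.

Lemma adjoint_ex (C : H -> H) (M : R) : linP C -> continuous C -> 0 <= M ->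
  (forall x, nm (C x) <= M * nm x) ->
  exists Cs : H -> H, [/\ linP Cs, continuous Cs,
    (forall y, nm (Cs y) <= M * nm y) & (forall x y, ip (C x) y = ip x (Cs y))].
Proof.
move=> cl cc M0 hM.
have hz y : exists z, forall x, ip (C x) y = ip x z.
  apply: (@riesz (fun x => (ip (C x) y : R[i]^o))).
    by move=> a x x'; rewrite /= (cl a x x') ipDZl.
  move=> x; exact: (continuous_comp (cc x) (@ip_contl y (C x))).
have [Cs hCs] := choice hz.
have Csl : linP Cs.
  move=> a y y'; apply: ip_sep => x.
  by rewrite -hCs ipDr ipZr ipDr ipZr !hCs.
have Csb y : nm (Cs y) <= M * nm y.
  have h := CS (C (Cs y)) y.
  have e : rip (C (Cs y)) y = nm (Cs y) ^+ 2 by rewrite /rip hCs ipxxR.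
  rewrite e in h.
  have h2 := hM (Cs y).
  have h3 : nm (Cs y) ^+ 2 <= M * nm (Cs y) * nm y.
    apply: (le_trans h); apply: ler_wpM2r => //; exact: nm_ge0.
  have ny := nm_ge0 y; have nc := nm_ge0 (Cs y).
  have [c0|c0] := eqVneq (nm (Cs y)) 0; first by rewrite c0 mulr_ge0.
  have cp : 0 < nm (Cs y) by rewrite lt_def c0.
  rewrite -(ler_pM2l cp); move: h3; rewrite expr2 => h3.
  by apply: (le_trans h3); rewrite le_eqVlt; apply/orP; left; apply/eqP; ring.
exists Cs; split => //.
exact: (cont_of_bound Csl M0 Csb).
Qed.
Ltac hsolve := apply: ip_sep => ?; rewrite ?(ipDr, ipNr, ipZr, ip0r); ring.

Lemma key_ineq (C Cs P : H -> H) (V : normedModType R[i]) (g : H -> V) :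
  linP C -> linP P -> linP g ->
  (forall x, g (P x) = 0) -> (forall x m, g m = 0 -> ip (x - P x) m = 0) ->
  (forall x, nm (C x) <= nm x) -> (forall x y, ip (C x) y = ip x (Cs y)) ->
  forall u w, P u = u ->
  nm (C u + w - C (P (Cs w))) ^+ 2 <= nm u ^+ 2 + nm w ^+ 2.
Proof.
move=> Cl Pl gl hP1 hP2 nC hCs u w Pu.
set v := P (Cs w).
have Pv : P v = v by apply: (proj_fix gl hP1 hP2); exact: hP1.
set z := u - v.
have Pz : P z = z by rewrite /z (linB Pl) Pu Pv.
have e1 : C u + w - C v = C z + w by rewrite /z (linB Cl); hsolve.
rewrite e1 nmD2.
have e2 : rip (C z) w = rip z v.
  by rewrite /rip hCs -{1}Pz (proj_sa hP1 hP2).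
have e3 : nm u ^+ 2 = nm z ^+ 2 + nm v ^+ 2 + 2 * rip z v.
  by rewrite -nmD2 /z subrK.
rewrite e2 e3.
have h := nC z.
have h2 : nm (C z) ^+ 2 <= nm z ^+ 2.
  by rewrite ler_pXn2r ?nnegrE ?nm_ge0.
have h3 := nm_ge0 v.
nra.
Qed.
Lemma core (C E : H -> H) :
  bounded_op C -> Defs.is_contraction C -> bounded_op E ->
  (forall x, E (E x) = 0) -> (forall x, E (C x) = 0) ->
  similar_to_contraction (fun x => C x + E x).
Proof.
move=> [Cl Cc] Cctr [El Ec] EE EC.
have nC x : nm (C x) <= nm x by have := Cctr x; rewrite !nmE lecR.
have [P [hP1 hP2]] := proj_ex El Ec.
have Pl : linP P := proj_lin El hP1 hP2.
have Pc : continuous P := proj_cont El hP1 hP2.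
have Pfix x : E x = 0 -> P x = x := @proj_fix _ _ _ El hP1 hP2 x.
have [Cs [Csl Csc Csb hCs]] : exists Cs : H -> H, [/\ linP Cs, continuous Cs,
    (forall y, nm (Cs y) <= 1 * nm y) & (forall x y, ip (C x) y = ip x (Cs y))].
  by apply: adjoint_ex => // x; rewrite mul1r.
have [kE [kE0 hkE]] := op_bound El Ec.
pose Q x := x - P x.
pose B x := C (Q x) + E x.
pose X x := P (Cs (B x)).
have Ql : linP Q by move=> a x y; rewrite /Q (Pl a x y); hsolve.
have Bl : linP B.
  by move=> a x y; rewrite /B (Ql a x y) (Cl a _ _) (El a x y); hsolve.
have Xl : linP X by move=> a x y; rewrite /X (Bl a x y) (Csl a _ _) (Pl a _ _).
have Qc : continuous Q := cont_add (@cont_id _ H) (cont_opp Pc).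
have Bc : continuous B := cont_add (cont_comp Qc Cc) Ec.
have Xc : continuous X := cont_comp Bc (cont_comp Csc Pc).
have EP x : E (P x) = 0 := hP1 x.
have PP x : P (P x) = P x := Pfix _ (EP x).
have QP x : Q (P x) = 0 by rewrite /Q PP subrr.
have PQ x : P (Q x) = 0 by rewrite /Q (linB Pl) PP subrr.
have QQ x : Q (Q x) = Q x by rewrite {1}/Q PQ subr0.
have EQ x : E (Q x) = E x by rewrite /Q (linB El) EP subr0.
have BP x : B (P x) = 0 by rewrite /B QP (lin0 Cl) EP addr0.
have XP x : X (P x) = 0 by rewrite /X BP (lin0 Csl) (lin0 Pl).
have PX x : P (X x) = X x := PP _.
have QX x : Q (X x) = 0 := QP _.
have XX x : X (X x) = 0 := XP _.
have BQ x : B (Q x) = B x by rewrite /B QQ EQ.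
have XQ x : X (Q x) = X x by rewrite /X BQ.
pose t : R := (1 + kE)^-1.
have t0 : 0 < t by rewrite /t invr_gt0; lra.
pose tc : R[i] := t%:C%C.
have tcp : 0 < tc by rewrite /tc ltcE /= eqxx t0.
have tc0 : tc != 0 by rewrite gt_eqF.
have EX x : E (X x) = 0 := EP _.
pose L x := P x + tc *: Q x - tc *: X x.
pose Li y := P (y + X y) + tc^-1 *: Q (y + X y).
have Ll : linP L by move=> a x y; rewrite /L (Pl a x y) (Ql a x y) (Xl a x y); hsolve.
have Lil : linP Li.
  move=> a x y; rewrite /Li (Xl a x y).
  have -> : a *: x + y + (a *: X x + X y) = a *: (x + X x) + (y + X y) by hsolve.
  by rewrite (Pl a _ _) (Ql a _ _); hsolve.
have Lc : continuous L :=
  cont_add (cont_add Pc (cont_scale (a := tc) Qc)) (cont_opp (cont_scale (a := tc) Xc)).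
have Yc : continuous (fun y => y + X y) := cont_add (@cont_id _ H) Xc.
have Lic : continuous Li :=
  cont_add (cont_comp Yc Pc) (cont_scale (a := tc^-1) (cont_comp Yc Qc)).
have LiL x : Li (L x) = x.
  have XL : X (L x) = tc *: X x.
    by rewrite /L (linB Xl) (linD Xl) !(linZ Xl) XP XQ XX scaler0 subr0 add0r.
  have e1 : L x + X (L x) = P x + tc *: Q x by rewrite XL /L; hsolve.
  rewrite /Li e1 (linD Pl) (linZ Pl) PP PQ (linD Ql) (linZ Ql) QP QQ.
  by rewrite scaler0 addr0 add0r scalerA mulVf // scale1r /Q; hsolve.
have LLi y : L (Li y) = y.
  have eLi : Li y = P y + X y + tc^-1 *: Q y.
    by rewrite /Li (linD Pl) PX (linD Ql) QX addr0.
  rewrite eLi /L.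
  rewrite !(linD Pl) (linZ Pl) PP PX PQ scaler0 addr0.
  rewrite !(linD Ql) (linZ Ql) QP QX QQ add0r add0r.
  rewrite !(linD Xl) (linZ Xl) XP XX XQ add0r add0r.
  by rewrite !scalerA mulfV // !scale1r /Q; hsolve.
exists L, Li; split => //.
move=> x; set y := C (L x) + E (L x).
have Ey : E y = 0 by rewrite /y (linD El) EC EE addr0.
have Py : P y = y := Pfix _ Ey.
have Qy : Q y = 0 by rewrite /Q Py subrr.
have By : B y = 0 by rewrite /B Qy (lin0 Cl) Ey addr0.
have Xy : X y = 0 by rewrite /X By (lin0 Csl) (lin0 Pl).
have -> : Li y = y by rewrite /Li Xy addr0 Py Qy scaler0 addr0.
have ey : y = C (P x) + tc *: B x - C (P (Cs (tc *: B x))).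
  rewrite (linZ Csl) (linZ Pl) (linZ Cl) /y /L /X /B /Q.
  rewrite !(linD Cl, linB Cl, linZ Cl, linN Cl) !(linD El, linB El, linZ El, linN El) !EP.
  hsolve.
have hk := @key_ineq C Cs P _ E Cl Pl El hP1 hP2 nC hCs (P x) (tc *: B x) (PP x).
rewrite -ey nmZR in hk; last exact: ltW.
have hB : nm (B x) <= (1 + kE) * nm (Q x).
  rewrite /B -EQ; apply: (le_trans (nmD _ _)).
  have := nC (Q x); have := hkE (Q x); lra.
have ht : t * (1 + kE) = 1 by rewrite /t mulVf // gt_eqF //; lra.
have hpy := proj_pyth hP1 hP2 x.
rewrite -/(Q x) in hpy.
have hQ0 := nm_ge0 (Q x); have hB0 := nm_ge0 (B x).
have htB : t * nm (B x) <= nm (Q x).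
  by rewrite -[nm (Q x)]mul1r -ht -mulrA ler_wpM2l // ltW.
have hy2 : nm y ^+ 2 <= nm x ^+ 2.
  apply: (le_trans hk); rewrite hpy lerD2l.
  have := mulr_ge0 (ltW t0) hB0; move: htB.
  set a := t * nm (B x); set b := nm (Q x); nra.
rewrite !nmE lecR; apply: nm_le_sq => //; exact: nm_ge0.
Qed.
Lemma sim_ext (T1 T2 : H -> H) : (forall x, T1 x = T2 x) ->
  similar_to_contraction T1 -> similar_to_contraction T2.
Proof.
move=> e [L [Li [Lb Lib h1 h2 hc]]]; exists L, Li; split => // x.
by rewrite -e; exact: hc.
Qed.

Lemma bounded_comp (F G : H -> H) : bounded_op F -> bounded_op G ->
  bounded_op (fun x => G (F x)).
Proof.
move=> [Fl Fc] [Gl Gc]; split; last exact: cont_comp Fc Gc.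
by move=> a x y; rewrite Fl Gl.
Qed.

Lemma bounded_add (F G : H -> H) : bounded_op F -> bounded_op G ->
  bounded_op (fun x => F x + G x).
Proof.
move=> [Fl Fc] [Gl Gc]; split; last exact: cont_add Fc Gc.
by move=> a x y; rewrite Fl Gl; hsolve.
Qed.

Lemma iter_bounded k (E : H -> H) : bounded_op E -> bounded_op (iter k E).
Proof.
move=> [El Ec]; elim: k => [|k [IHl IHc]]; split.
- by [].
- exact: (@cont_id _ H).
- by move=> a x y; rewrite /= IHl El.
- exact: cont_comp IHc Ec.
Qed.

Lemma iter0 k (E : H -> H) : linP E -> iter k E 0 = 0.
Proof. by move=> El; elim: k => [|k IH] //=; rewrite IH (lin0 El). Qed.

Lemma iter_comm a b (E : H -> H) x : iter a E (iter b E x) = iter b E (iter a E x).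
Proof. by rewrite -!iterD addnC. Qed.

Lemma core2 (C E : H -> H) :
  bounded_op C -> similar_to_contraction C -> bounded_op E ->
  (forall x, E (E x) = 0) -> (forall x, E (C x) = 0) ->
  similar_to_contraction (fun x => C x + E x).
Proof.
move=> Cb [L0 [Li0 [L0b Li0b h1 h2 hctr]]] Eb EE EC.
have [Li0l _] := Li0b.
pose C0 x := Li0 (C (L0 x)); pose E0 x := Li0 (E (L0 x)).
have C0b : bounded_op C0 by apply: bounded_comp Li0b; apply: bounded_comp Cb.
have E0b : bounded_op E0 by apply: bounded_comp Li0b; apply: bounded_comp Eb.
have E0E0 x : E0 (E0 x) = 0 by rewrite /E0 h1 EE (lin0 Li0l).
have E0C0 x : E0 (C0 x) = 0 by rewrite /E0 /C0 h1 EC (lin0 Li0l).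
have [L1 [Li1 [L1b Li1b k1 k2 ctr1]]] := core C0b hctr E0b E0E0 E0C0.
exists (fun x => L0 (L1 x)), (fun x => Li1 (Li0 x)); split.
- exact: bounded_comp.
- exact: bounded_comp.
- by move=> x; rewrite k1 h1.
- by move=> x; rewrite h2 k2.
- by move=> x; rewrite /= (linD Li0l); exact: ctr1.
Qed.

Lemma nil_case n : forall C E : H -> H,
  bounded_op C -> similar_to_contraction C -> bounded_op E ->
  (forall x, iter n.+1 E x = 0) -> (forall x, E (C x) = 0) ->
  similar_to_contraction (fun x => C x + E x).
Proof.
elim: n => [|n IH] C E Cb Cs Eb hn EC.
  by apply: sim_ext Cs => x; have := hn x; rewrite /= => ->; rewrite addr0.
have [El Ec] := Eb.
pose g := iter n.+1 E.
have [gl gc] : bounded_op g := iter_bounded n.+1 Eb.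
have [R0 [hR1 hR2]] := proj_ex gl gc.
have R0b : bounded_op R0 by split; [exact: (proj_lin gl hR1 hR2)|exact: (proj_cont gl hR1 hR2)].
have Rfix z : g z = 0 -> R0 z = z := @proj_fix _ _ _ gl hR1 hR2 z.
have kerE z : g (E z) = 0 by rewrite /g -iterSr; exact: hn.
have kerC z : g (C z) = 0 by rewrite /g iterSr EC iter0.
have RE z : R0 (E z) = E z := Rfix _ (kerE z).
pose E1 x := E (R0 x).
have iterE1 k x : iter k.+1 E1 x = iter k.+1 E (R0 x).
  elim: k => [|k IHk] //.
  rewrite iterS IHk [in RHS]iterS /E1 Rfix //.
  by rewrite /g iter_comm; have := hR1 x; rewrite /g => ->; rewrite iter0.
have E1b : bounded_op E1 by exact: bounded_comp R0b Eb.
have hE1 x : iter n.+1 E1 x = 0 by rewrite iterE1; exact: hR1.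
have E1C x : E1 (C x) = 0 by rewrite /E1 Rfix // EC.
have sC' := IH C E1 Cb Cs E1b hE1 E1C.
pose Q x := x - R0 x.
have Qb : bounded_op Q.
  split; last exact: cont_add (@cont_id _ H) (cont_opp (proj_cont gl hR1 hR2)).
  by move=> a x y; rewrite /Q (proj_lin gl hR1 hR2); hsolve.
pose E' x := E (Q x).
have E'b : bounded_op E' by exact: bounded_comp Qb Eb.
have C'b : bounded_op (fun x => C x + E1 x) by exact: bounded_add.
have E'E' x : E' (E' x) = 0 by rewrite /E' {1}/Q RE subrr (lin0 El).
have E'C' x : E' (C x + E1 x) = 0.
  rewrite /E' /Q Rfix ?subrr ?(lin0 El) //.
  by rewrite (linD gl) kerC kerE addr0.
apply: (sim_ext _ (core2 C'b sC' E'b E'E' E'C')) => x.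
rewrite /E1 /E' /Q (linB El) -addrA; congr (_ + _).
by rewrite addrC subrK.
Qed.
End Hilbert.

Unset Implicit Arguments.
Local Close Scope classical_set_scope.

Theorem corollary3p4 (R : realType) (H : completeNormedModType R[i])
    (ip : H -> H -> R[i]) (C E : H -> H) :
  is_hilbert_inner_product ip ->
  bounded_op C -> similar_to_contraction C ->
  bounded_op E -> nilpotent_op E ->
  (forall x : H, E (C x) = 0) ->
  similar_to_contraction (fun x : H => C x + E x).
Proof.
move=> hip Cb Cs Eb [[|n] hn] EC.
  apply: (nil_case hip (n := 0)) => // x; exact: hn (E x).
exact: (nil_case hip (n := n)).
Qed.
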